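(* Let $\operatorname{P}\in\operatorname{MM}(A,\theta,S)$, let $i\in S_j$, and suppose $0\le|A_{y,S_j}|\le1$ for all $y\in\mathbb{Y}_{S_j}^{\neq}$. Then for every $\tilde\theta_i\in(0,1)$, the proportional $\tilde\theta_i$-covariation scheme minimizes the CD distance $\mathcal{D}_{\operatorname{CD}}(\sigma(\operatorname{P}),\operatorname{P})$ among all $\tilde\theta_i$-covariation schemes $\sigma$.
   Context: Let $\mathbb{Y}$ be a finite set with $q$ elements. A monomial model $\operatorname{MM}(A,\theta,S)$ is given by $A\in\mathcal{M}_{q\times k}(\mathbb{Z}_{\ge0})$ with rows $A_y$, parameters $\theta\in\mathbb{R}^k_{>0}$, and a partition $S=\{S_1,\dots,S_n\}$ of $[k]$ with each block $(\theta_l)_{l\in S_m}$ in the open probability simplex; $\operatorname{P}(y)=\prod_l\theta_l^{A_{y,l}}$, a probability distribution for every such parameter. $|A_{y,S_j}|=\sum_{l\in S_j}A_{y,l}$; $\mathbb{Y}_{S_j}^{\neq}=\{y\in\mathbb{Y}: A_{y,l}\ne0\text{ for some }l\in S_j\}$. A $\tilde\theta_i$-covariation scheme $\sigma$ maps $\theta$ to $\tilde\theta$ with $\tilde\theta_i$ given, $\tilde\theta_l=\theta_l$ for $l\notin S_j$, and $(\tilde\theta_l)_{l\in S_j}$ in the open simplex; $\sigma(\operatorname{P})(y)=\tilde\theta^{A_y}$. The proportional scheme sets $\tilde\theta_k=\frac{1-\tilde\theta_i}{1-\theta_i}\theta_k$ for $k\in S_j\setminus\{i\}$. The CD distance is $\mathcal{D}_{\operatorname{CD}}(\tilde{\operatorname{P}},\operatorname{P})=\log\max_{y}\frac{\tilde{\operatorname{P}}(y)}{\operatorname{P}(y)}-\log\min_y\frac{\tilde{\operatorname{P}}(y)}{\operatorname{P}(y)}$.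 *)

(* Defs.v *)
From mathcomp Require Import all_boot all_order all_algebra.
From mathcomp Require Import all_classical all_reals all_analysis.
Set Implicit Arguments. Unset Strict Implicit. Unset Printing Implicit Defensive.
Import Order.TTheory GRing.Theory Num.Theory.
Local Open Scope ring_scope.

Section MM.
Variables (R : realType) (Y : finType) (k n : nat).
Variable A : Y -> 'I_k -> nat.
(* the partition S = {S_1,..,S_n} of [k]: blk l = index m of the block S_m containing l *)
Variable blk : 'I_k -> 'I_n.

Definition in_block (j : 'I_n) (l : 'I_k) : bool := blk l == j.

Definition valid_param (th : 'I_k -> R) : Prop :=
  (forall l, 0 < th l) /\ (forall m : 'I_n, \sum_(l | in_block m l) th l = 1).

Definition mm_prob (th : 'I_k -> R) (y : Y) : R := \prod_(l < k) th l ^+ A y l.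

Definition is_monomial_model : Prop :=
  forall th, valid_param th -> (forall y, 0 < mm_prob th y) /\ \sum_y mm_prob th y = 1.

Definition blk_deg (j : 'I_n) (y : Y) : nat := (\sum_(l | in_block j l) A y l)%N.

Definition Yneq (j : 'I_n) : pred Y := [pred y | [exists l, in_block j l && (A y l != 0%N)]].

Definition is_covariation (j : 'I_n) (i : 'I_k) (t : R) (th th' : 'I_k -> R) : Prop :=
  th' i = t /\
  (forall l, ~~ in_block j l -> th' l = th l) /\
  (forall l, in_block j l -> 0 < th' l) /\
  \sum_(l | in_block j l) th' l = 1.

Definition proportional (j : 'I_n) (i : 'I_k) (t : R) (th : 'I_k -> R) : 'I_k -> R :=
  fun l => if l == i then t
           else if in_block j l then (1 - t) / (1 - th i) * th l
           else th l.

Definition cd_dist (Pt P : Y -> R) : R :=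
  let r y := Pt y / P y in
  let mx := \big[Num.max/0]_y r y in
  let mn := \big[Num.min/mx]_y r y in
  ln mx - ln mn.
End MM.

(* Main.v *)
Require Import Defs.
From mathcomp Require Import all_boot all_order all_algebra.
From mathcomp Require Import all_classical all_reals all_analysis.
From mathcomp Require Import ring lra zify.
Import Order.TTheory GRing.Theory Num.Theory.
Local Open Scope ring_scope.
Set Implicit Arguments. Unset Strict Implicit.

Section Aux.
Variables (R : realType) (Y : finType) (k n : nat).
Variable A : Y -> 'I_k -> nat.
Variable blk : 'I_k -> 'I_n.
Variable j : 'I_n.

Lemma mm_pos (th : 'I_k -> R) : (forall l, 0 < th l) -> forall y, 0 < mm_prob A th y.
Proof. by move=> h y; rewrite /mm_prob; apply: prodr_gt0 => l _; apply: exprn_gt0. Qed.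

Lemma mm_notY (th th' : 'I_k -> R) y :
  (forall m, ~~ in_block blk j m -> th' m = th m) ->
  y \notin Yneq A blk j -> mm_prob A th' y = mm_prob A th y.
Proof.
move=> hout hy; apply: eq_bigr => m _.
case hm: (in_block blk j m); last by rewrite hout ?hm.
have -> : A y m = 0%N.
  apply/eqP; apply: contraNT hy => hA; rewrite inE; apply/existsP; exists m.
  by rewrite hm.
by rewrite !expr0.
Qed.

Lemma mm_ratio (th th' : 'I_k -> R) y l :
  (forall m, ~~ in_block blk j m -> th' m = th m) ->
  (blk_deg A blk j y <= 1)%N -> in_block blk j l -> A y l != 0%N ->
  mm_prob A th' y * th l = mm_prob A th y * th' l.
Proof.
move=> hout hd hl hA.
rewrite /blk_deg (bigD1 l) //= in hd.
have hA0 : (0 < A y l)%N by rewrite lt0n.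
have hA1 : A y l = 1%N by lia.
have hrest : forall m, in_block blk j m -> m != l -> A y m = 0%N.
  move=> m hm hml.
  have : (\sum_(m | in_block blk j m && (m != l)) A y m == 0)%N. { move: hd. set s := (\sum_(_ | _) _)%N. move=> hd. apply/eqP. lia. }
  rewrite sum_nat_eq0 => /forallP /(_ m) /implyP.
  by rewrite hm hml => /(_ isT) /eqP.
rewrite /mm_prob (bigD1 l) //= [in RHS](bigD1 l) //= hA1 !expr1.
have -> : \prod_(m < k | m != l) th' m ^+ A y m = \prod_(m < k | m != l) th m ^+ A y m.
  apply: eq_bigr => m hml; case hm: (in_block blk j m).
    by rewrite hrest ?expr0.
  by rewrite hout // hm.
ring.
Qed.

Lemma all_used (th : 'I_k -> R) l0 l y0 :
  is_monomial_model R A blk -> valid_param blk th ->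
  (forall y, y \in Yneq A blk j -> (0 <= blk_deg A blk j y <= 1)%N) ->
  in_block blk j l0 -> in_block blk j l -> A y0 l0 != 0%N ->
  exists y, A y l != 0%N.
Proof.
move=> hmm [hpos hsum] hdeg hl0 hl hA0.
case: (eqVneq l l0) => [->|hne]; first by exists y0.
case: (boolP [exists y, A y l != 0%N]) => [/existsP//|/existsPn hno].
exfalso.
pose d := th l0 / 2.
have hd : 0 < d by rewrite /d divr_gt0.
pose th2 := fun m => if m == l0 then d else if m == l then th l + d else th m.
have hout : forall m, ~~ in_block blk j m -> th2 m = th m.
  move=> m hm; rewrite /th2.
  case: eqP => [e|_]; first by rewrite e hl0 in hm.
  case: eqP => [e|_]; first by rewrite e hl in hm.
  by [].
have hv2 : valid_param blk th2.
  split.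
    move=> m; rewrite /th2; case: eqP => _ //; case: eqP => _ //.
    by rewrite addr_gt0.
  move=> m'.
  case hb: (in_block blk m' l0).
    have hb' : in_block blk m' l.
      move: hb hl0 hl; rewrite /in_block => /eqP -> /eqP -> /eqP ->; done.
    rewrite -(hsum m') (bigD1 l0) //= (bigD1 l) /=; last by rewrite hb' hne.
    rewrite [in RHS](bigD1 l0) //= [in RHS](bigD1 l) /=; last by rewrite hb' hne.
    have -> : \sum_(i < k | (in_block blk m' i && (i != l0)) && (i != l)) th2 i =
              \sum_(i < k | (in_block blk m' i && (i != l0)) && (i != l)) th i.
      apply: eq_bigr => x /andP [/andP [_ h1] h2].
      by rewrite /th2 (negbTE h1) (negbTE h2).
    rewrite /th2 eqxx (negbTE hne) eqxx /d; lra.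
  have hb' : in_block blk m' l = false.
    apply/negbTE; move: hb; rewrite /in_block => /negbT.
    by move: hl0 hl => /eqP -> /eqP ->.
  rewrite -(hsum m'); apply: eq_bigr => x hx.
  rewrite /th2; case: eqP => [e|_]; first by rewrite e hb in hx.
  case: eqP => [e|_]; first by rewrite e hb' in hx.
  by [].
have hle : forall y, mm_prob A th2 y <= mm_prob A th y /\
                     (y = y0 -> mm_prob A th2 y < mm_prob A th y).
  move=> y.
  case: (boolP (y \in Yneq A blk j)) => hy; last first.
    rewrite (mm_notY hout hy); split => // e; exfalso; move: hy; rewrite e => /negP; apply.
    by rewrite inE; apply/existsP; exists l0; rewrite hl0 hA0.
  move: (hy); rewrite inE => /existsP [m /andP [hm hAm]].
  have := hdeg y hy => /andP [_ hdy].
  have hr := mm_ratio hout hdy hm hAm.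
  have hmpos := hpos m.
  have hP := mm_pos hpos y.
  have hP2 : 0 < mm_prob A th2 y by apply: mm_pos; case: hv2.
  have hml : m != l by apply: contra (hno y) => /eqP <-.
  case: (eqVneq m l0) => [em|hm0].
    have e2 : th2 m = th m / 2 by rewrite /th2 em eqxx.
    rewrite e2 in hr.
    have : mm_prob A th2 y = mm_prob A th y / 2.
      apply: (mulIf (lt0r_neq0 hmpos)); rewrite hr; rewrite mulrA mulrAC; done.
    move=> ->; split; first lra. move=> _; lra.
  have e2 : th2 m = th m by rewrite /th2 (negbTE hm0) (negbTE hml).
  rewrite e2 in hr.
  have := mulIf (lt0r_neq0 hmpos) hr => ->; split => // e.
  move: hAm; rewrite e.
  (* y0 uses l0 and m, m <> l0: contradiction with blk_deg *)
  move=> hAm.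
  have := hdeg y0; rewrite inE => /(_ (introT existsP (ex_intro _ l0 (introT andP (conj hl0 hA0))))).
  move=> /andP [_]; rewrite /blk_deg (bigD1 l0) //= (bigD1 m) /=; last by rewrite hm hm0.
  move: hA0 hAm; rewrite -!lt0n; lia.
have := hmm th2 hv2 => [[_ hs2]].
have := hmm th (conj hpos hsum) => [[_ hs1]].
have : \sum_y mm_prob A th2 y < \sum_y mm_prob A th y.
  rewrite (bigD1 y0) //= [in X in _ < X](bigD1 y0) //=.
  apply: ltr_leD; first by case: (hle y0) => _; apply.
  by apply: ler_sum => y _; case: (hle y).
by rewrite hs1 hs2 ltxx.
Qed.

End Aux.

Lemma cd_le (R : realType) (Y : finType) (f g : Y -> R) :
  (forall y, 0 < f y) -> (forall y, 0 < g y) ->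
  (forall y, exists y', f y <= g y') -> (forall y, exists y', g y' <= f y) ->
  ln (\big[Num.max/0]_y f y) - ln (\big[Num.min/(\big[Num.max/0]_y f y)]_y f y)
  <= ln (\big[Num.max/0]_y g y) - ln (\big[Num.min/(\big[Num.max/0]_y g y)]_y g y).
Proof.
move=> fp gp C1 C2.
case: (pickP (@predT Y)) => [y0 _|hemp]; last first.
  by rewrite !big_pred0 //.
set mxf := \big[Num.max/0]_y f y.
set mxg := \big[Num.max/0]_y g y.
have hmxf : f y0 <= mxf by apply: le_bigmax.
have hmxg : g y0 <= mxg by apply: le_bigmax.
have pf := fp y0. have pg := gp y0.
have mfp : 0 < \big[Num.min/mxf]_y f y.
  by elim/big_ind: _ => //; [lra | move=> x y hx hy; rewrite lt_min hx hy].
have mgp : 0 < \big[Num.min/mxg]_y g y.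
  by elim/big_ind: _ => //; [lra | move=> x y hx hy; rewrite lt_min hx hy].
have h1 : mxf <= mxg.
  rewrite /mxf; elim/big_ind: _ => //; first lra.
    by move=> x y hx hy; rewrite ge_max hx hy.
  move=> y _; have [y' hy'] := C1 y; apply: (le_trans hy'); exact: le_bigmax.
set mnf := \big[Num.min/mxf]_y f y.
set mng := \big[Num.min/mxg]_y g y.
have h2 : mng <= mnf.
  apply: (big_ind (fun x => mng <= x)).
  - have [y' hy'] := C2 y0. have := bigmin_le mxg y' g. rewrite -/mng. lra.
  - by move=> x y hx hy; rewrite le_min hx hy.
  - move=> y _; have [y' hy'] := C2 y. have := bigmin_le mxg y' g. rewrite -/mng. lra.
have l1 : ln mxf <= ln mxg by rewrite ler_ln // posrE; lra.
have l2 : ln mng <= ln mnf.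
  by rewrite ler_ln // posrE.
lra.
Qed.

Theorem theorem3 (R : realType) (Y : finType) (k n : nat)
  (A : Y -> 'I_k -> nat) (blk : 'I_k -> 'I_n) (th : 'I_k -> R)
  (j : 'I_n) (i : 'I_k) :
  is_monomial_model R A blk ->
  valid_param blk th ->
  in_block blk j i ->
  (forall y, y \in Yneq A blk j -> (0 <= blk_deg A blk j y <= 1)%N) ->
  forall t : R, 0 < t < 1 ->
  forall th' : 'I_k -> R, is_covariation blk j i t th th' ->
    cd_dist (mm_prob A (proportional blk j i t th)) (mm_prob A th)
    <= cd_dist (mm_prob A th') (mm_prob A th).
Proof.
move=> hmm hv hi hdeg t /andP [t0 t1] th' [h1 [h2 [h3 h4]]].
have [hpos hsum] := hv.
have th'pos : forall l, 0 < th' l.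
  move=> l; case hb: (in_block blk j l); first exact: h3.
  by rewrite h2 ?hb.
pose P := fun l => in_block blk j l && (l != i).
have hsumrest : forall (g : 'I_k -> R),
    g i + \sum_(l | P l) g l = \sum_(l | in_block blk j l) g l.
  by move=> g; rewrite [in RHS](bigD1 i).
have srest' : \sum_(l | P l) th' l = 1 - t.
  have := hsumrest th'; rewrite h4 h1; lra.
have srest : \sum_(l | P l) th l = 1 - th i.
  have := hsumrest th; rewrite hsum; lra.
have [x hx] : exists x, P x.
  case: (boolP [exists x, P x]) => [/existsP //|/existsPn hn]; exfalso.
  move: srest'; rewrite big1; first lra.
  by move=> z hz; have := hn z; rewrite hz.
have thi1 : th i < 1.
  move: srest; rewrite (bigD1 x) //=.
  have : 0 <= \sum_(l | P l && (l != x)) th l.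
    by apply: sumr_ge0 => l _; apply: ltW.
  have := hpos x; lra.
set c := (1 - t) / (1 - th i).
have cpos : 0 < c by apply: divr_gt0; lra.
set tp := proportional blk j i t th.
have houtp : forall m, ~~ in_block blk j m -> tp m = th m.
  move=> m hm; rewrite /tp /proportional; case: eqP => [e|_].
    by rewrite e hi in hm.
  by rewrite (negbTE hm).
have tpi : tp i = t by rewrite /tp /proportional eqxx.
have tpm : forall m, P m -> tp m = c * th m.
  by move=> m /andP [hm hmi]; rewrite /tp /proportional (negbTE hmi) hm.
have tppos : forall m, 0 < tp m.
  move=> m; case hb: (in_block blk j m); last by rewrite houtp ?hb.
  case: (eqVneq m i) => [->|hmi]; first by rewrite tpi.
  have hPm0 : P m by rewrite /P hb hmi.
  rewrite tpm //; exact: mulr_gt0.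
pose F := fun l => th' l / th l.
have hF : forall l, th' l = F l * th l.
  by move=> l; rewrite /F divfK // lt0r_neq0.
have [lM hPM hM] : exists2 l, P l & c <= F l.
  case: (@arg_maxP _ _ _ x P F hx) => lM hPM hmax; exists lM => //.
  have : \sum_(l | P l) th' l <= \sum_(l | P l) F lM * th l.
    apply: ler_sum => l hl; rewrite hF; apply: ler_wpM2r; first exact: ltW.
    exact: hmax.
  rewrite -mulr_sumr srest' srest => h.
  by rewrite /c ler_pdivrMr // subr_gt0.
have [lm hPm hm] : exists2 l, P l & F l <= c.
  case: (@arg_minP _ _ _ x P F hx) => lm hPm hmin; exists lm => //.
  have : \sum_(l | P l) F lm * th l <= \sum_(l | P l) th' l.
    apply: ler_sum => l hl; rewrite hF; apply: ler_wpM2r; first exact: ltW.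
    exact: hmin.
  rewrite -mulr_sumr srest' srest => h.
  by rewrite /c ler_pdivlMr // subr_gt0.
pose rp := fun y => mm_prob A tp y / mm_prob A th y.
pose rs := fun y => mm_prob A th' y / mm_prob A th y.
have rat : forall (th2 : 'I_k -> R) y m,
    mm_prob A th2 y * th m = mm_prob A th y * th2 m ->
    mm_prob A th2 y / mm_prob A th y = th2 m / th m.
  move=> th2 y m e; apply/eqP; rewrite eqr_div; last 2 first.
  - by apply: lt0r_neq0; apply: mm_pos.
  - by apply: lt0r_neq0.
  by rewrite e mulrC.
have rsF : forall y m, in_block blk j m -> A y m != 0%N -> rs y = F m.
  move=> y m hbm hAm.
  have hy : y \in Yneq A blk j by rewrite inE; apply/existsP; exists m; rewrite hbm.
  have /andP [_ hdy] := hdeg y hy.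
  exact: rat (mm_ratio h2 hdy hbm hAm).
have key : forall y, rp y = rs y \/ exists2 m, P m & (A y m != 0%N) /\ rp y = c.
  move=> y; case: (boolP (y \in Yneq A blk j)) => hy; last first.
    by left; rewrite /rp /rs (mm_notY houtp hy) (mm_notY h2 hy).
  move: (hy); rewrite inE => /existsP [m /andP [hbm hAm]].
  have /andP [_ hdy] := hdeg y hy.
  have e1 := rat _ _ _ (mm_ratio houtp hdy hbm hAm).
  have e2 := rat _ _ _ (mm_ratio h2 hdy hbm hAm).
  case: (eqVneq m i) => [em|hmi].
    by left; rewrite /rp /rs e1 e2 em tpi h1.
  have hPm' : P m by rewrite /P hbm hmi.
  right; exists m => //; split => //.
  by rewrite /rp e1 tpm // mulfK // lt0r_neq0.
have usedM : forall y m, P m -> A y m != 0%N -> exists y', A y' lM != 0%N.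
  move=> y m /andP [hbm _] hAm.
  by apply: (all_used (l0 := m) (y0 := y) hmm hv hdeg hbm _ hAm); case/andP: hPM.
have usedm : forall y m, P m -> A y m != 0%N -> exists y', A y' lm != 0%N.
  move=> y m /andP [hbm _] hAm.
  by apply: (all_used (l0 := m) (y0 := y) hmm hv hdeg hbm _ hAm); case/andP: hPm.
have C1 : forall y, exists y', rp y <= rs y'.
  move=> y; case: (key y) => [e|[m hPm0 [hAm e]]]; first by exists y; rewrite e.
  have [yM hyM] := usedM _ _ hPm0 hAm.
  exists yM; rewrite e (rsF yM lM) //; by case/andP: hPM.
have C2 : forall y, exists y', rs y' <= rp y.
  move=> y; case: (key y) => [e|[m hPm0 [hAm e]]]; first by exists y; rewrite e.
  have [ym hym] := usedm _ _ hPm0 hAm.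
  exists ym; rewrite e (rsF ym lm) //; by case/andP: hPm.
have rpp : forall y, 0 < rp y by move=> y; apply: divr_gt0; apply: mm_pos.
have rsp : forall y, 0 < rs y by move=> y; apply: divr_gt0; apply: mm_pos.
exact: (@cd_le R Y rp rs rpp rsp C1 C2).
Qed.
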